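(* Consider the primal SDP $\tau=\inf\{\sum_{j\in[p]}\langle\mathbf{C}_j,\mathbf{X}_j\rangle:\ \mathbf{X}_j\in\mathcal{S}_j^+\ (j\in[p]),\ \sum_{j\in[p]}\mathcal{A}_j\mathbf{X}_j=\mathbf{b}\}$ and its dual $\rho=\sup\{\mathbf{b}^\top\mathbf{y}:\ \mathbf{y}\in\mathbb{R}^\zeta,\ \mathbf{C}_j-\mathcal{A}_j^\top\mathbf{y}\in\mathcal{S}_j^+\ (j\in[p])\}$. Assume (i) strong duality: $\rho=\tau\in\mathbb{R}$; and (ii) constant trace property: there exist $a_1,\dots,a_p>0$ such that whenever $\mathbf{X}_j\in\mathcal{S}_j$ ($j\in[p]$) satisfy $\sum_{j\in[p]}\mathcal{A}_j\mathbf{X}_j=\mathbf{b}$, then $\mathrm{trace}(\mathbf{X}_j)=a_j$ for all $j\in[p]$. Define $\psi:\mathbb{R}^\zeta\to\mathbb{R}$, $\psi(\mathbf{y}):=\mathbf{b}^\top\mathbf{y}+\sum_{j\in[p]}a_j\lambda_{\min}(\mathbf{C}_j-\mathcal{A}_j^\top\mathbf{y})$. Then $\tau=\sup_{\mathbf{y}\in\mathbb{R}^\zeta}\psi(\mathbf{y})$. Moreover, if the dual SDP has an optimal solution, then $\sup_{\mathbf{y}\in\mathbb{R}^\zeta}\psi(\mathbf{y})$ is attained.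
   Context: For $j\in[p]$, $\mathcal{S}_j$ is the space of real symmetric block-diagonal matrices $\mathrm{diag}(\mathbf{X}_{1,j},\dots,\mathbf{X}_{\omega_j,j})$ with fixed block sizes $s^{(1,j)},\dots,s^{(\omega_j,j)}\ge1$, with inner product $\langle\mathbf{A},\mathbf{B}\rangle=\mathrm{trace}(\mathbf{B}^\top\mathbf{A})$, and $\mathcal{S}_j^+$ is the set of positive semidefinite elements of $\mathcal{S}_j$. Given $\mathbf{C}_j\in\mathcal{S}_j$, $\mathbf{A}_{i,j}\in\mathcal{S}_j$ ($i\in[\zeta]$) and $\mathbf{b}\in\mathbb{R}^\zeta$: $\mathcal{A}_j\mathbf{X}:=(\langle\mathbf{A}_{1,j},\mathbf{X}\rangle,\dots,\langle\mathbf{A}_{\zeta,j},\mathbf{X}\rangle)$ and its adjoint $\mathcal{A}_j^\top\mathbf{z}:=\sum_{i\in[\zeta]}z_i\mathbf{A}_{i,j}$. $\lambda_{\min}$ denotes the smallest eigenvalue of a real symmetric matrix. *)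

(* Defs.v *)
From HB Require Import structures.
From mathcomp Require Import all_boot all_order all_algebra.
From mathcomp Require Import classical_sets reals constructive_ereal ereal.
Set Implicit Arguments. Unset Strict Implicit. Unset Printing Implicit Defensive.
Import Order.TTheory GRing.Theory Num.Theory.
Local Open Scope ring_scope.
Local Open Scope classical_set_scope.

(* Block structure given by the sequence of block sizes s = [s1; ...; s_omega];
   the matrix size is sumn s. *)
Definition same_block (s : seq nat) (i k : nat) : bool :=
  has (fun t => (sumn (take t s) <= i < sumn (take t.+1 s))%N &&
                (sumn (take t s) <= k < sumn (take t.+1 s))%N) (iota 0 (size s)).

Definition inS {R : realType} (s : seq nat) (X : 'M[R]_(sumn s)) : Prop :=
  X^T = X /\ forall i k : 'I_(sumn s), ~~ same_block s i k -> X i k = 0.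

Definition psd {R : realType} (n : nat) (X : 'M[R]_n) : Prop :=
  X^T = X /\ forall x : 'cV[R]_n, 0 <= (x^T *m X *m x) ord0 ord0.

Definition inSplus {R : realType} (s : seq nat) (X : 'M[R]_(sumn s)) : Prop :=
  inS X /\ psd X.

Definition inner {R : realType} (n : nat) (A B : 'M[R]_n) : R := \tr (B^T *m A).

Definition Aop {R : realType} (zeta n : nat) (A : 'I_zeta -> 'M[R]_n)
  (X : 'M[R]_n) : 'cV[R]_zeta := \col_i inner (A i) X.

Definition Aadj {R : realType} (zeta n : nat) (A : 'I_zeta -> 'M[R]_n)
  (z : 'cV[R]_zeta) : 'M[R]_n := \sum_i z i ord0 *: A i.

Definition dotv {R : realType} (zeta : nat) (b y : 'cV[R]_zeta) : R :=
  \sum_i b i ord0 * y i ord0.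

Definition lambda_min {R : realType} (n : nat) (A : 'M[R]_n) : R :=
  inf [set a : R | eigenvalue A a].

(* Main.v *)
Require Import Defs.
From HB Require Import structures.
From mathcomp Require Import all_boot all_order all_algebra.
From mathcomp Require Import classical_sets reals constructive_ereal ereal.
From mathcomp Require Import complex ring.
Import Order.TTheory GRing.Theory Num.Theory.
Set Implicit Arguments. Unset Strict Implicit.
Local Open Scope ring_scope.
Local Open Scope complex_scope.
Local Open Scope classical_set_scope.

Lemma conj_rc (R : realType) (x : R) : Num.conj (x%:C : R[i]) = x%:C.
Proof. by apply: conj_Creal; apply/complex_realP; exists x. Qed.

Lemma map_conj_rc (R : realType) m n (M : 'M[R]_(m,n)) :
  map_mx Num.conj (map_mx (real_complex R) M) = map_mx (real_complex R) M.
Proof. by apply/matrixP => i j; rewrite !mxE conj_rc. Qed.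

Lemma Re_mul_rc (R : realType) (a : R[i]) (x : R) : complex.Re (a * x%:C) = complex.Re a * x.
Proof. by case: a => a1 a2 /=; rewrite mulr0 subr0. Qed.
Lemma Im_mul_rc (R : realType) (a : R[i]) (x : R) : complex.Im (a * x%:C) = complex.Im a * x.
Proof. by case: a => a1 a2 /=; rewrite mulr0 add0r. Qed.

Lemma conj_decomp (R : realType) (z : R[i]) :
  Num.conj z = (complex.Re z)%:C - 'i%C * (complex.Im z)%:C.
Proof.
have ci : Num.conj ('i%C : R[i]) = - 'i%C.
  by apply/eqP; rewrite eq_complex /= oppr0 !eqxx.
by rewrite {1}[z]complexE rmorphD rmorphM /= !conj_rc ci mulNr. Qed.

Notation rcm R := (map_mx (real_complex R)).

Lemma quad_nonneg (R : realType) n (X : 'M[R]_n) (v : 'rV[R[i]]_n) :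
  psd X -> 0 <= (v *m rcm R X *m map_mx Num.conj (v^T)) ord0 ord0.
Proof.
move=> [XT Xpsd].
set ar := map_mx (@complex.Re R) v; set br := map_mx (@complex.Im R) v.
have Ev : v = rcm R ar + 'i%C *: rcm R br.
  by apply/matrixP => i j; rewrite !mxE [LHS]complexE.
have Ec : map_mx Num.conj (v^T) = (rcm R ar)^T - 'i%C *: (rcm R br)^T.
  by apply/matrixP => i j; rewrite !mxE conj_decomp.
rewrite Ec {1}Ev.
set A := rcm R ar; set B := rcm R br; set Xc := rcm R X.
have ii : 'i%C * 'i%C = -1 :> R[i] by rewrite -expr2 sqr_i.
rewrite !(mulmxDl, mulmxDr, mulmxBr, mulmxBl) !mulmxN -!scalemxAl -!scalemxAr !scalerA ii.
have sym : (B *m Xc *m A^T) = (A *m Xc *m B^T)^T.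
  rewrite !trmx_mul trmxK /Xc mulmxA. congr (_ *m _ *m _). by rewrite map_trmx XT.
have hx : forall (a : 'rV[R]_n), 0 <= (rcm R a *m Xc *m (rcm R a)^T) ord0 ord0.
  move=> a; rewrite map_trmx -!map_mxM mxE ler0c.
  by have := Xpsd a^T; rewrite trmxK.
have h1 := hx ar; have h2 := hx br.
rewrite sym; move: (A *m Xc *m A^T) (A *m Xc *m B^T) (B *m Xc *m B^T) h1 h2 => M1 M2 M3 h1 h2.
rewrite !mxE.
have -> : M1 ord0 ord0 + 'i%C * M2 ord0 ord0 + (- ('i%C * M2 ord0 ord0) - -1 * M3 ord0 ord0) = M1 ord0 ord0 + M3 ord0 ord0 by ring.
by apply: addr_ge0.
Qed.

Lemma row_unit_neq0 (F : fieldType) n (P : 'M[F]_n) i : P \in unitmx -> row i P != 0.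
Proof.
move=> Pu; apply/negP => /eqP h.
have : row i P *m invmx P = 0 by rewrite h mul0mx.
rewrite rowE mulmxK // => /matrixP /(_ 0 i); rewrite !mxE !eqxx /=.
by move/eqP; rewrite oner_eq0.
Qed.

Lemma Re_mulmx (R : realType) m n (v : 'M[R[i]]_(m, n)) (M : 'M[R]_n) :
  map_mx (@complex.Re R) (v *m rcm R M) = map_mx (@complex.Re R) v *m M.
Proof.
apply/matrixP => i j; rewrite !mxE.
rewrite (@big_morph _ _ (@complex.Re R) 0 +%R) //.
  by apply: eq_bigr => k _; rewrite !mxE Re_mul_rc.
by move=> [a b] [c d].
Qed.

Lemma Im_mulmx (R : realType) m n (v : 'M[R[i]]_(m, n)) (M : 'M[R]_n) :
  map_mx (@complex.Im R) (v *m rcm R M) = map_mx (@complex.Im R) v *m M.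
Proof.
apply/matrixP => i j; rewrite !mxE.
rewrite (@big_morph _ _ (@complex.Im R) 0 +%R) //.
  by apply: eq_bigr => k _; rewrite !mxE Im_mul_rc.
by move=> [a b] [c d].
Qed.

Lemma sym_herm (R : realType) n (S : 'M[R]_n) : S^T = S -> rcm R S \is hermsymmx.
Proof.
move=> ST; apply: realsym_hermsym.
  by apply/is_hermitianmxP; rewrite expr0 scale1r; apply/matrixP => i j; rewrite !mxE /= -{1}ST mxE.
by apply/mxOverP => i j; rewrite mxE; apply/complex_realP; eexists.
Qed.

Lemma sym_normal (R : realType) n (S : 'M[R]_n) : S^T = S -> rcm R S \is normalmx.
Proof. by move=> ST; apply: hermitian_normalmx; apply: sym_herm. Qed.

Lemma core (R : realType) n (S X : 'M[R]_n) :
  S^T = S -> psd X -> lambda_min S * \tr X <= \tr (X^T *m S).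
Proof.
move=> ST Xpsd; have XT := Xpsd.1.
have /orthomx_spectralP hSc := sym_normal ST.
have hreal := hermitian_spectral_diag_real (sym_herm ST).
move: hSc hreal (spectral_unitarymx (rcm R S)).
set P := spectralmx _; set d := spectral_diag _ => hSc hreal Pu.
set Sc := rcm R S in hSc.
have Punit : P \in unitmx by apply: unitarymx_unit.
have dreal : forall i, d 0 i = (complex.Re (d 0 i))%:C.
  move=> i; have := mxOverP hreal 0 i => /complex_realP [k ->] //.
have PS : P *m Sc = diag_mx d *m P by rewrite hSc !mulmxA mulmxV // mul1mx.
have eig : forall i, eigenvalue S (complex.Re (d 0 i)).
  move=> i; set v := row i P.
  have vS : v *m Sc = d 0 i *: v.
    rewrite /v -row_mul PS; apply/matrixP => a b; rewrite !mxE.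
    rewrite (bigD1 i) //= big1 ?addr0; first by rewrite !mxE eqxx mulr1n.
    by move=> k /negbTE ki; rewrite !mxE eq_sym ki mulr0n mul0r.
  have hv : v != 0 by apply: row_unit_neq0.
  set r := complex.Re (d 0 i).
  have ReE : map_mx (@complex.Re R) v *m S = r *: map_mx (@complex.Re R) v.
    rewrite -Re_mulmx vS; apply/matrixP => a b; rewrite !mxE dreal mulrC Re_mul_rc mulrC //.
  have ImE : map_mx (@complex.Im R) v *m S = r *: map_mx (@complex.Im R) v.
    rewrite -Im_mulmx vS; apply/matrixP => a b; rewrite !mxE dreal mulrC Im_mul_rc mulrC //.
  have [h0|h0] := eqVneq (map_mx (@complex.Re R) v) 0; last by apply/eigenvalueP; exists (map_mx (@complex.Re R) v).
  have [h1|h1] := eqVneq (map_mx (@complex.Im R) v) 0; last by apply/eigenvalueP; exists (map_mx (@complex.Im R) v).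
  exfalso; move/negP: hv; apply; apply/eqP/matrixP => a b.
  move/matrixP: h0 => /(_ a b); rewrite !mxE => e0.
  move/matrixP: h1 => /(_ a b); rewrite !mxE => e1.
  by rewrite [P i b]complexE e0 e1 mulr0 addr0.
have lb : forall a, eigenvalue S a -> exists k, a = complex.Re (d 0 k).
  move=> a /eigenvalueP [v vS vn0].
  set w := rcm R v *m invmx P.
  have wD : w *m diag_mx d = a%:C *: w.
    have e : invmx P *m diag_mx d = Sc *m invmx P.
      by rewrite hSc -!mulmxA mulmxV // mulmx1.
    by rewrite /w -mulmxA e mulmxA -map_mxM vS map_mxZ /= -scalemxAl.
  have wn0 : w != 0.
    apply: contraNneq vn0 => w0; apply/eqP/matrixP => x y.
    have : w *m P = rcm R v by rewrite /w mulmxKV.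
    rewrite w0 mul0mx => /matrixP /(_ x y); rewrite !mxE => /esym.
    by case.
  have [k wk] : exists k, w 0 k != 0.
    apply/existsP; apply: contraNT wn0; rewrite negb_exists => /forallP h.
    apply/eqP/matrixP => x y; rewrite ord1; have := h y; rewrite negbK => /eqP ->; by rewrite mxE.
  exists k; clearbody w; move/matrixP: wD => /(_ 0 k); rewrite mul_mx_diag !mxE [_ * w 0 k]mulrC.
  move=> h; have e := mulfI wk h; by rewrite e.
have hlb : has_lbound (fun a => eigenvalue S a).
  exists (- \sum_k `|complex.Re (d 0 k)|) => a /lb [k ->].
  rewrite lerNl; apply: le_trans (_ : `|complex.Re (d 0 k)| <= _).
    by rewrite -normrN ler_norm.
  rewrite (bigD1 k) //= lerDl; exact: sumr_ge0.
have lam : forall i, (lambda_min S)%:C <= d 0 i.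
  by move=> i; rewrite dreal lecR; apply: (ge_inf hlb); apply: eig.
rewrite XT -lecR rmorphM /= -!trace_map_mx map_mxM.
set Xc := rcm R X; fold Sc.
set M := P *m Xc *m map_mx Num.conj (P^T).
have Pst : map_mx Num.conj (P^T) *m P = 1%:M by rewrite -invmx_unitary // mulVmx.
have trX : \tr Xc = \tr M by rewrite /M -mulmxA mxtrace_mulC -mulmxA Pst mulmx1.
have trXS : \tr (Xc *m Sc) = \tr (M *m diag_mx d).
  by rewrite hSc invmx_unitary // /M !mulmxA mxtrace_mulC !mulmxA.
have Mii : forall i, 0 <= M i i.
  move=> i; have := quad_nonneg (row i P) Xpsd.
  suff -> : M i i = (row i P *m Xc *m map_mx Num.conj ((row i P)^T)) 0 0 by [].
  rewrite !mxE; apply: eq_bigr => k _; rewrite !mxE; congr (_ * _).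
  by apply: eq_bigr => l _; rewrite !mxE.
clearbody M.
rewrite trX trXS /mxtrace mulr_sumr; apply: ler_sum => i _.
rewrite mul_mx_diag mxE mulrC; apply: ler_wpM2l; [exact: Mii | exact: lam].
Qed.

Lemma lam_ge0 (R : realType) n (S : 'M[R]_n) : psd S -> 0 <= lambda_min S.
Proof.
move=> [ST Spsd]; rewrite /lambda_min.
case: (boolp.pselect (exists a, eigenvalue S a)) => [[a0 Ea0]|ne]; last first.
  have -> : [set a : R | eigenvalue S a] = set0.
    by apply/seteqP; split=> a // Ea; apply: ne; exists a.
  by rewrite inf0.
apply: lb_le_inf; first by exists a0.
move=> a /eigenvalueP [v vS vn0].
have := Spsd v^T; rewrite trmxK vS -scalemxAl mxE.
have [k vk] : exists k, v 0 k != 0.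
  apply/existsP; apply: contraNT vn0; rewrite negb_exists => /forallP h.
  by apply/eqP/matrixP => x y; rewrite ord1 mxE; apply/eqP; have := h y; rewrite negbK.
have qpos : 0 < (v *m v^T) 0 0.
  rewrite mxE (bigD1 k) //= mxE; apply: ltr_pwDl.
    by rewrite -expr2 exprn_even_gt0 //= vk.
  by apply: sumr_ge0 => j _; rewrite mxE -expr2 sqr_ge0.
by rewrite pmulr_lge0.
Qed.

Lemma inner_sum (R : realType) n (X : 'M[R]_n) (I : Type) (r : seq I) (F : I -> 'M[R]_n) :
  inner (\sum_(i <- r) F i) X = \sum_(i <- r) inner (F i) X.
Proof. by rewrite /inner mulmx_sumr raddf_sum. Qed.
Lemma inner_scale (R : realType) n (X M : 'M[R]_n) c : inner (c *: M) X = c * inner M X.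
Proof. by rewrite /inner -scalemxAr linearZ. Qed.
Lemma inner_B (R : realType) n (X M N : 'M[R]_n) : inner (M - N) X = inner M X - inner N X.
Proof. by rewrite /inner mulmxBr linearB. Qed.

Lemma adj_sym (R : realType) zeta n (A : 'I_zeta -> 'M[R]_n) (y : 'cV[R]_zeta) :
  (forall i, (A i)^T = A i) -> (Aadj A y)^T = Aadj A y.
Proof.
move=> h; rewrite /Aadj linear_sum; apply: eq_bigr => i _; by rewrite linearZ /= h.
Qed.

Lemma sumn_pos (s : seq nat) : (0 < size s)%N -> all (fun k => (0 < k)%N) s -> (0 < sumn s)%N.
Proof. by case: s => // k s _ /= /andP [k0 _]; rewrite addn_gt0 k0. Qed.

Local Close Scope complex_scope.
Unset Implicit Arguments.

Theorem lemma5 (R : realType) (p zeta : nat) (s : 'I_p -> seq nat)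
  (C : forall j : 'I_p, 'M[R]_(sumn (s j)))
  (A : forall j : 'I_p, 'I_zeta -> 'M[R]_(sumn (s j)))
  (b : 'cV[R]_zeta) (tau : R) (a : 'I_p -> R) :
  (forall j, (0 < size (s j))%N /\ all (fun k => (0 < k)%N) (s j)) ->
  (forall j, inS (C j)) ->
  (forall j i, inS (A j i)) ->
  (* (i) strong duality: rho = tau, a real number *)
  ereal_inf [set (\sum_j inner (C j) (X j))%:E |
               X in [set X : forall j : 'I_p, 'M[R]_(sumn (s j)) |
                     (forall j, inSplus (X j)) /\ \sum_j Aop (A j) (X j) = b]]
    = tau%:E ->
  ereal_sup [set (dotv b y)%:E |
               y in [set y : 'cV[R]_zeta | forall j, inSplus (C j - Aadj (A j) y)]]
    = tau%:E ->
  (* (ii) constant trace property with constants a_j > 0 *)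
  (forall j, 0 < a j) ->
  (forall X : forall j : 'I_p, 'M[R]_(sumn (s j)),
     (forall j, inS (X j)) -> \sum_j Aop (A j) (X j) = b ->
     forall j, \tr (X j) = a j) ->
  let psi := fun y : 'cV[R]_zeta =>
    dotv b y + \sum_j a j * lambda_min (C j - Aadj (A j) y) in
  ereal_sup [set (psi y)%:E | y in [set: 'cV[R]_zeta]] = tau%:E /\
  ((exists y : 'cV[R]_zeta,
      (forall j, inSplus (C j - Aadj (A j) y)) /\
      (dotv b y)%:E = ereal_sup [set (dotv b y')%:E |
               y' in [set y' : 'cV[R]_zeta | forall j, inSplus (C j - Aadj (A j) y')]]) ->
   exists y0 : 'cV[R]_zeta,
     (psi y0)%:E = ereal_sup [set (psi y)%:E | y in [set: 'cV[R]_zeta]]).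
Proof.
move=> Hs HC HA Hinf Hsup Ha Htr psi.
have Ssym : forall j y, (C j - Aadj (A j) y)^T = C j - Aadj (A j) y.
  move=> j y; rewrite linearB /= (HC j).1 adj_sym //.
  by move=> i; exact: (HA j i).1.
have Key1 : forall y (X : forall j : 'I_p, 'M[R]_(sumn (s j))),
    (forall j, inSplus (X j)) -> \sum_j Aop (A j) (X j) = b ->
    psi y <= \sum_j inner (C j) (X j).
  move=> y X HX Hb.
  have decomp : \sum_j inner (C j) (X j) =
      \sum_j inner (C j - Aadj (A j) y) (X j) + dotv b y.
    have -> : dotv b y = \sum_j inner (Aadj (A j) y) (X j).
      rewrite /dotv -Hb.
      under eq_bigr => i _ do rewrite summxE big_distrl /=.
      rewrite exchange_big /=; apply: eq_bigr => j _.
      rewrite /Aadj inner_sum; apply: eq_bigr => i _.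
      by rewrite inner_scale mxE mulrC.
    rewrite -big_split /=; apply: eq_bigr => j _.
    by rewrite inner_B subrK.
  rewrite decomp /psi addrC lerD2r; apply: ler_sum => j _.
  have trj := Htr X (fun j => (HX j).1) Hb j.
  rewrite mulrC -trj; apply: core; first exact: Ssym.
  exact: (HX j).2.
have Key2 : forall y, ((psi y)%:E <= tau%:E)%E.
  move=> y; rewrite -Hinf; apply: le_ereal_inf_tmp => z [X [HX Hb] <-].
  rewrite lee_fin; exact: Key1.
have Key3 : forall y, (forall j, inSplus (C j - Aadj (A j) y)) -> dotv b y <= psi y.
  move=> y Hy; rewrite /psi lerDl; apply: sumr_ge0 => j _.
  apply: mulr_ge0; first exact: ltW.
  exact: lam_ge0 (Hy j).2.
have G1 : ereal_sup [set (psi y)%:E | y in [set: 'cV[R]_zeta]] = tau%:E.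
  apply/eqP; rewrite eq_le; apply/andP; split.
    by apply: ge_ereal_sup => z [y _ <-]; exact: Key2.
  rewrite -{1}Hsup; apply: ge_ereal_sup => z [y Hy <-].
  apply: (@le_trans _ _ (psi y)%:E); first by rewrite lee_fin; exact: Key3.
  by apply: ereal_sup_ubound; exists y.
split => //.
move=> [y [Hy Hopt]]; exists y; rewrite G1.
apply/eqP; rewrite eq_le Key2 /= -Hsup -Hopt lee_fin; exact: Key3.
Qed.
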